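(* Let $S=(s_{jl})\in\mathbb{C}^{4\times4}$ be Hermitian and $\varepsilon\in\{1,-1\}$. The multiset of roots (counted with multiplicity) of the quadratic polynomial $d\mapsto d^2+2p(\theta_1,\theta_2)\,d+q(\theta_1,\theta_2)$ is independent of $(\theta_1,\theta_2)\in(-\pi,\pi]^2$ if and only if $s_{12}=s_{34}=0$ and at most one of the four numbers $s_{13},s_{14},s_{23},s_{24}$ is nonzero.
   Context: Let $S=(s_{jl})_{j,l=1}^4$ be a Hermitian $4\times4$ complex matrix (so $s_{jj}\in\mathbb{R}$ and $s_{lj}=\overline{s_{jl}}$) and $\varepsilon\in\{1,-1\}$. For $\theta_1,\theta_2\in\mathbb{R}$ define $$p=-\tfrac12\Big[s_{11}+s_{22}+s_{33}+s_{44}+2\varepsilon\operatorname{Re}(s_{12}\mathrm{e}^{i\theta_1})+2\varepsilon\operatorname{Re}(s_{34}\mathrm{e}^{i\theta_2})\Big],$$ $$\begin{aligned}q={}&-\big(|s_{13}|^2-s_{11}s_{33}+|s_{14}|^2-s_{11}s_{44}+|s_{23}|^2-s_{22}s_{33}+|s_{24}|^2-s_{22}s_{44}\big)\\&-2\varepsilon\Big[-(s_{33}+s_{44})\operatorname{Re}(s_{12}\mathrm{e}^{i\theta_1})+\operatorname{Re}\big((s_{13}\overline{s_{23}}+s_{14}\overline{s_{24}})\mathrm{e}^{i\theta_1}\big)\\&\qquad-(s_{11}+s_{22})\operatorname{Re}(s_{34}\mathrm{e}^{i\theta_2})+\operatorname{Re}\big((\overline{s_{13}}s_{14}+\overline{s_{23}}s_{24})\mathrm{e}^{i\theta_2}\big)\Big]\\&-2\operatorname{Re}\big((s_{14}\overline{s_{23}}-s_{12}s_{34})\mathrm{e}^{i(\theta_1+\theta_2)}\big)-2\operatorname{Re}\big((s_{13}\overline{s_{24}}-s_{12}\overline{s_{34}})\mathrm{e}^{i(\theta_1-\theta_2)}\big).\end{aligned}$$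 *)

(* Defs.v *)
From Stdlib Require Import Reals Lra.
Open Scope R_scope.

Definition Cx : Type := (R * R)%type.
Definition Cre (z : Cx) : R := fst z.
Definition Cim (z : Cx) : R := snd z.
Definition C0 : Cx := (0, 0).
Definition RtoC (x : R) : Cx := (x, 0).
Definition Cadd (z w : Cx) : Cx := (fst z + fst w, snd z + snd w).
Definition Csub (z w : Cx) : Cx := (fst z - fst w, snd z - snd w).
Definition Cmul (z w : Cx) : Cx :=
  (fst z * fst w - snd z * snd w, fst z * snd w + snd z * fst w).
Definition Cconj (z : Cx) : Cx := (fst z, - snd z).
Definition Cnorm2 (z : Cx) : R := fst z * fst z + snd z * snd z.
Definition Cexpi (t : R) : Cx := (cos t, sin t).

(* A 4x4 complex matrix, entries s j l for 1 <= j, l <= 4. *)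
Definition hermitian4 (s : nat -> nat -> Cx) : Prop :=
  forall j l, (1 <= j <= 4)%nat -> (1 <= l <= 4)%nat -> s l j = Cconj (s j l).

Definition pfun (s : nat -> nat -> Cx) (eps t1 t2 : R) : R :=
  - (1/2) * ( Cre (s 1%nat 1%nat) + Cre (s 2%nat 2%nat) + Cre (s 3%nat 3%nat)
              + Cre (s 4%nat 4%nat)
              + 2 * eps * Cre (Cmul (s 1%nat 2%nat) (Cexpi t1))
              + 2 * eps * Cre (Cmul (s 3%nat 4%nat) (Cexpi t2)) ).

Definition qfun (s : nat -> nat -> Cx) (eps t1 t2 : R) : R :=
  let s11 := Cre (s 1%nat 1%nat) in let s22 := Cre (s 2%nat 2%nat) in
  let s33 := Cre (s 3%nat 3%nat) in let s44 := Cre (s 4%nat 4%nat) in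
  let s12 := s 1%nat 2%nat in let s13 := s 1%nat 3%nat in
  let s14 := s 1%nat 4%nat in let s23 := s 2%nat 3%nat in
  let s24 := s 2%nat 4%nat in let s34 := s 3%nat 4%nat in
  - ( Cnorm2 s13 - s11 * s33 + Cnorm2 s14 - s11 * s44
      + Cnorm2 s23 - s22 * s33 + Cnorm2 s24 - s22 * s44 )
  - 2 * eps * ( - (s33 + s44) * Cre (Cmul s12 (Cexpi t1))
                + Cre (Cmul (Cadd (Cmul s13 (Cconj s23)) (Cmul s14 (Cconj s24)))
                            (Cexpi t1))
                - (s11 + s22) * Cre (Cmul s34 (Cexpi t2))
                + Cre (Cmul (Cadd (Cmul (Cconj s13) s14) (Cmul (Cconj s23) s24))
                            (Cexpi t2)) )
  - 2 * Cre (Cmul (Csub (Cmul s14 (Cconj s23)) (Cmul s12 s34)) (Cexpi (t1 + t2)))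
  - 2 * Cre (Cmul (Csub (Cmul s13 (Cconj s24)) (Cmul s12 (Cconj s34)))
                  (Cexpi (t1 - t2))).

Definition quadpoly (p q : R) (d : Cx) : Cx :=
  Cadd (Cadd (Cmul d d) (Cmul (RtoC (2 * p)) d)) (RtoC q).

(* r1, r2 are the roots, counted with multiplicity, of the monic quadratic:
   the polynomial factors as (d - r1)(d - r2). *)
Definition roots_are (p q : R) (r1 r2 : Cx) : Prop :=
  forall d : Cx, quadpoly p q d = Cmul (Csub d r1) (Csub d r2).

Definition same_multiset2 (a1 a2 b1 b2 : Cx) : Prop :=
  (a1 = b1 /\ a2 = b2) \/ (a1 = b2 /\ a2 = b1).

Definition in_angle (t : R) : Prop := - PI < t <= PI.

Definition roots_independent (s : nat -> nat -> Cx) (eps : R) : Prop :=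
  forall t1 t2 u1 u2 r1 r2 r1' r2',
    in_angle t1 -> in_angle t2 -> in_angle u1 -> in_angle u2 ->
    roots_are (pfun s eps t1 t2) (qfun s eps t1 t2) r1 r2 ->
    roots_are (pfun s eps u1 u2) (qfun s eps u1 u2) r1' r2' ->
    same_multiset2 r1 r2 r1' r2'.

Definition at_most_one_nonzero (a b c d : Cx) : Prop :=
  (a = C0 \/ b = C0) /\ (a = C0 \/ c = C0) /\ (a = C0 \/ d = C0) /\
  (b = C0 \/ c = C0) /\ (b = C0 \/ d = C0) /\ (c = C0 \/ d = C0).

(* Main.v *)
Require Import Defs.
From Stdlib Require Import Reals Lra Psatz.
Open Scope R_scope.

Lemma Cx_eq (z w : Cx) : fst z = fst w -> snd z = snd w -> z = w.
Proof. destruct z, w; simpl; intros; subst; reflexivity. Qed.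

Lemma Cmul_zero z w : Cmul z w = C0 -> z = C0 \/ w = C0.
Proof.
  destruct z as [a b], w as [c d]; unfold Cmul, C0; simpl; intro H.
  injection H as H1 H2.
  assert (Hp : (a*a+b*b)*(c*c+d*d) = 0) by nra.
  apply Rmult_integral in Hp; destruct Hp as [Hp|Hp].
  - left; apply Cx_eq; simpl; nra.
  - right; apply Cx_eq; simpl; nra.
Qed.

Lemma roots_exist p q : exists r1 r2, roots_are p q r1 r2.
Proof.
  destruct (Rle_dec 0 (p*p - q)) as [Hd|Hd].
  - assert (Hs := sqrt_sqrt _ Hd); revert Hs; generalize (sqrt (p*p-q)); intros sq Hs.
    exists (-p + sq, 0), (-p - sq, 0); intros [x y].
    unfold quadpoly, Cadd, Cmul, Csub, RtoC; simpl; apply Cx_eq; simpl; lra.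
  - assert (Hd' : 0 <= q - p*p) by lra.
    assert (Hs := sqrt_sqrt _ Hd'); revert Hs; generalize (sqrt (q - p*p)); intros sq Hs.
    exists (-p, sq), (-p, -sq); intros [x y].
    unfold quadpoly, Cadd, Cmul, Csub, RtoC; simpl; apply Cx_eq; simpl; lra.
Qed.

Lemma roots_unique p q r1 r2 r1' r2' :
  roots_are p q r1 r2 -> roots_are p q r1' r2' -> same_multiset2 r1 r2 r1' r2'.
Proof.
  intros H H'.
  assert (E : forall d, Cmul (Csub d r1) (Csub d r2) = Cmul (Csub d r1') (Csub d r2')).
  { intro d; rewrite <- H, <- H'; reflexivity. }
  assert (Z : Cmul (Csub r1 r1') (Csub r1 r2') = C0).
  { rewrite <- E. destruct r1, r2; unfold Cmul, Csub, C0; simpl; apply Cx_eq; simpl; ring. }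
  pose proof (E (0,0)) as E0; pose proof (E (1,0)) as E1.
  destruct r1 as [a1 b1], r2 as [a2 b2], r1' as [c1 d1], r2' as [c2 d2].
  unfold Cmul, Csub in E0, E1; simpl in E0, E1.
  injection E0 as E0a E0b; injection E1 as E1a E1b.
  apply Cmul_zero in Z; unfold Csub, C0 in Z; simpl in Z.
  destruct Z as [Z|Z]; injection Z as Za Zb.
  - left; split; apply Cx_eq; simpl; lra.
  - right; split; apply Cx_eq; simpl; lra.
Qed.

Lemma coeff_eq p q p' q' r1 r2 r1' r2' :
  roots_are p q r1 r2 -> roots_are p' q' r1' r2' -> same_multiset2 r1 r2 r1' r2' ->
  p = p' /\ q = q'.
Proof.
  intros H H' [[-> ->]|[-> ->]].
  - assert (E : forall d, quadpoly p q d = quadpoly p' q' d).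
    { intro d; rewrite H, H'; reflexivity. }
    pose proof (E (0,0)) as E0; pose proof (E (1,0)) as E1.
    unfold quadpoly, Cadd, Cmul, RtoC in E0, E1; simpl in E0, E1.
    injection E0 as E0a E0b; injection E1 as E1a E1b. split; lra.
  - assert (E : forall d, quadpoly p q d = quadpoly p' q' d).
    { intro d; rewrite H, H'. destruct d, r1', r2'; unfold Cmul, Csub; apply Cx_eq; simpl; ring. }
    pose proof (E (0,0)) as E0; pose proof (E (1,0)) as E1.
    unfold quadpoly, Cadd, Cmul, RtoC in E0, E1; simpl in E0, E1.
    injection E0 as E0a E0b; injection E1 as E1a E1b. split; lra.
Qed.

Definition G (e ar ai br bi cr ci dr di t1 t2 : R) : R :=
  e*(ar*cos t1 - ai*sin t1) + e*(br*cos t2 - bi*sin t2)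
  + (cr*cos(t1+t2) - ci*sin(t1+t2)) + (dr*cos(t1-t2) - di*sin(t1-t2)).

Lemma ang0 : in_angle 0. Proof. unfold in_angle; pose proof PI_RGT_0; lra. Qed.
Lemma ang1 : in_angle (PI/2). Proof. unfold in_angle; pose proof PI_RGT_0; lra. Qed.
Lemma ang2 : in_angle PI. Proof. unfold in_angle; pose proof PI_RGT_0; lra. Qed.
Lemma ang3 : in_angle (-(PI/2)). Proof. unfold in_angle; pose proof PI_RGT_0; lra. Qed.

Ltac trig H := unfold G in H;
  rewrite ?cos_plus, ?sin_plus, ?cos_minus, ?sin_minus in H;
  rewrite ?cos_neg, ?sin_neg, ?cos_0, ?sin_0, ?cos_PI2, ?sin_PI2, ?cos_PI, ?sin_PI in H.

Lemma fourier e ar ai br bi cr ci dr di :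
  (e = 1 \/ e = -1) ->
  (forall t1 t2, in_angle t1 -> in_angle t2 ->
     G e ar ai br bi cr ci dr di t1 t2 = G e ar ai br bi cr ci dr di 0 0) ->
  ar = 0 /\ ai = 0 /\ br = 0 /\ bi = 0 /\ cr = 0 /\ ci = 0 /\ dr = 0 /\ di = 0.
Proof.
  intros He H.
  pose proof (H _ _ ang0 ang0) as H00; clear H00.
  pose proof (H _ _ ang0 ang1) as H01; pose proof (H _ _ ang0 ang2) as H02;
  pose proof (H _ _ ang0 ang3) as H03;
  pose proof (H _ _ ang1 ang0) as H10; pose proof (H _ _ ang1 ang1) as H11;
  pose proof (H _ _ ang1 ang2) as H12; pose proof (H _ _ ang1 ang3) as H13;
  pose proof (H _ _ ang2 ang0) as H20; pose proof (H _ _ ang2 ang1) as H21;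
  pose proof (H _ _ ang2 ang2) as H22; pose proof (H _ _ ang2 ang3) as H23;
  pose proof (H _ _ ang3 ang0) as H30; pose proof (H _ _ ang3 ang1) as H31;
  pose proof (H _ _ ang3 ang2) as H32; pose proof (H _ _ ang3 ang3) as H33.
  clear H.
  trig H01; trig H02; trig H03; trig H10; trig H11; trig H12; trig H13;
  trig H20; trig H21; trig H22; trig H23; trig H30; trig H31; trig H32; trig H33.
  destruct He; subst e; repeat split; lra.
Qed.

Definition diagsum s := Cre (s 1%nat 1%nat) + Cre (s 2%nat 2%nat) + Cre (s 3%nat 3%nat) + Cre (s 4%nat 4%nat).

Lemma pfun_form s eps t1 t2 : pfun s eps t1 t2 = -(1/2) * diagsum s -
  G eps (fst (s 1%nat 2%nat)) (snd (s 1%nat 2%nat)) (fst (s 3%nat 4%nat)) (snd (s 3%nat 4%nat)) 0 0 0 0 t1 t2.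
Proof. unfold pfun, diagsum, G, Cre, Cmul, Cexpi; simpl; field. Qed.

Definition Aq s := Cadd (Cmul (s 1%nat 3%nat) (Cconj (s 2%nat 3%nat))) (Cmul (s 1%nat 4%nat) (Cconj (s 2%nat 4%nat))).
Definition Bq s := Cadd (Cmul (Cconj (s 1%nat 3%nat)) (s 1%nat 4%nat)) (Cmul (Cconj (s 2%nat 3%nat)) (s 2%nat 4%nat)).
Definition Cq s := Csub (Cmul (s 1%nat 4%nat) (Cconj (s 2%nat 3%nat))) (Cmul (s 1%nat 2%nat) (s 3%nat 4%nat)).
Definition Dq s := Csub (Cmul (s 1%nat 3%nat) (Cconj (s 2%nat 4%nat))) (Cmul (s 1%nat 2%nat) (Cconj (s 3%nat 4%nat))).

Definition q0 s := let s11 := Cre (s 1%nat 1%nat) in let s22 := Cre (s 2%nat 2%nat) in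
  let s33 := Cre (s 3%nat 3%nat) in let s44 := Cre (s 4%nat 4%nat) in
  - ( Cnorm2 (s 1%nat 3%nat) - s11 * s33 + Cnorm2 (s 1%nat 4%nat) - s11 * s44
      + Cnorm2 (s 2%nat 3%nat) - s22 * s33 + Cnorm2 (s 2%nat 4%nat) - s22 * s44 ).

Definition qG s eps t1 t2 :=
  G eps (fst (Aq s) - (Cre (s 3%nat 3%nat) + Cre (s 4%nat 4%nat)) * fst (s 1%nat 2%nat))
        (snd (Aq s) - (Cre (s 3%nat 3%nat) + Cre (s 4%nat 4%nat)) * snd (s 1%nat 2%nat))
        (fst (Bq s) - (Cre (s 1%nat 1%nat) + Cre (s 2%nat 2%nat)) * fst (s 3%nat 4%nat))
        (snd (Bq s) - (Cre (s 1%nat 1%nat) + Cre (s 2%nat 2%nat)) * snd (s 3%nat 4%nat))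
        (fst (Cq s)) (snd (Cq s)) (fst (Dq s)) (snd (Dq s)) t1 t2.

Lemma qfun_form s eps t1 t2 : qfun s eps t1 t2 = q0 s - 2 * qG s eps t1 t2.
Proof. unfold qG. unfold qfun, q0, Aq, Bq, Cq, Dq, G, Cre, Cmul, Cexpi; simpl; ring. Qed.

Lemma conj_zero z w : fst (Cmul z (Cconj w)) = 0 -> snd (Cmul z (Cconj w)) = 0 -> z = C0 \/ w = C0.
Proof.
  intros H1 H2. apply Cmul_zero.
  destruct z as [a b], w as [c d]; unfold Cmul, Cconj, C0 in *; simpl in *.
  apply Cx_eq; simpl; nra.
Qed.

Lemma conj_zero' z w : fst (Cmul (Cconj z) w) = 0 -> snd (Cmul (Cconj z) w) = 0 -> z = C0 \/ w = C0.
Proof.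
  intros H1 H2. destruct (conj_zero w z) as [H|H]; [| |right; exact H|left; exact H];
  destruct z as [a b], w as [c d]; unfold Cmul, Cconj, C0 in *; simpl in *; lra.
Qed.

Theorem mainTheorem13 (s : nat -> nat -> Cx) (eps : R) :
  hermitian4 s -> (eps = 1 \/ eps = -1) ->
  (roots_independent s eps <->
   (s 1%nat 2%nat = C0 /\ s 3%nat 4%nat = C0 /\
    at_most_one_nonzero (s 1%nat 3%nat) (s 1%nat 4%nat)
                        (s 2%nat 3%nat) (s 2%nat 4%nat))).
Proof.
  intros _ He; split.
  - intro HI.
    assert (Hc : forall t1 t2, in_angle t1 -> in_angle t2 ->
       pfun s eps t1 t2 = pfun s eps 0 0 /\ qfun s eps t1 t2 = qfun s eps 0 0).
    { intros t1 t2 h1 h2.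
      destruct (roots_exist (pfun s eps t1 t2) (qfun s eps t1 t2)) as (r1 & r2 & R1).
      destruct (roots_exist (pfun s eps 0 0) (qfun s eps 0 0)) as (r1' & r2' & R2).
      exact (coeff_eq _ _ _ _ _ _ _ _ R1 R2 (HI _ _ _ _ _ _ _ _ h1 h2 ang0 ang0 R1 R2)). }
    assert (Hp := fourier eps (fst (s 1%nat 2%nat)) (snd (s 1%nat 2%nat)) (fst (s 3%nat 4%nat)) (snd (s 3%nat 4%nat)) 0 0 0 0 He).
    destruct Hp as (P1 & P2 & P3 & P4 & _).
    { intros t1 t2 h1 h2. destruct (Hc t1 t2 h1 h2) as [Hp _].
      rewrite !pfun_form in Hp. lra. }
    assert (E12 : s 1%nat 2%nat = C0) by (apply Cx_eq; simpl; assumption).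
    assert (E34 : s 3%nat 4%nat = C0) by (apply Cx_eq; simpl; assumption).
    split; [exact E12|split; [exact E34|]].
    assert (Hg : forall t1 t2, in_angle t1 -> in_angle t2 -> qG s eps t1 t2 = qG s eps 0 0).
    { intros t1 t2 h1 h2. destruct (Hc t1 t2 h1 h2) as [_ Hq].
      rewrite !qfun_form in Hq. lra. }
    destruct (fourier _ _ _ _ _ _ _ _ _ He Hg) as (Q1 & Q2 & Q3 & Q4 & Q5 & Q6 & Q7 & Q8).
    clear Hg Hc HI.
    unfold Aq, Bq, Cq, Dq in Q1, Q2, Q3, Q4, Q5, Q6, Q7, Q8.
    try rewrite E12 in Q1; try rewrite E12 in Q2; try rewrite E34 in Q3; try rewrite E34 in Q4;
    try rewrite E12, E34 in Q5; try rewrite E12, E34 in Q6; try rewrite E12, E34 in Q7; try rewrite E12, E34 in Q8.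
    unfold C0, Cmul, Cconj, Cadd, Csub in Q1, Q2, Q3, Q4, Q5, Q6, Q7, Q8; simpl in Q1, Q2, Q3, Q4, Q5, Q6, Q7, Q8.
    assert (Z1 : s 1%nat 4%nat = C0 \/ s 2%nat 3%nat = C0). { apply conj_zero; simpl; lra. }
    assert (Z2 : s 1%nat 3%nat = C0 \/ s 2%nat 4%nat = C0) by (apply conj_zero; simpl; lra).
    unfold at_most_one_nonzero.
    destruct Z1 as [Z1|Z1]; destruct Z2 as [Z2|Z2]; rewrite Z1, Z2 in Q1, Q2, Q3, Q4; simpl in Q1, Q2, Q3, Q4.
    + assert (Z3 : s 2%nat 3%nat = C0 \/ s 2%nat 4%nat = C0) by (apply conj_zero'; simpl; lra).
      destruct Z3 as [Z3|Z3]; tauto.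
    + assert (Z3 : s 1%nat 3%nat = C0 \/ s 2%nat 3%nat = C0) by (apply conj_zero; simpl; lra).
      destruct Z3 as [Z3|Z3]; tauto.
    + assert (Z3 : s 1%nat 4%nat = C0 \/ s 2%nat 4%nat = C0) by (apply conj_zero; simpl; lra).
      destruct Z3 as [Z3|Z3]; tauto.
    + assert (Z3 : s 1%nat 3%nat = C0 \/ s 1%nat 4%nat = C0) by (apply conj_zero'; simpl; lra).
      destruct Z3 as [Z3|Z3]; tauto.
  - intros (E12 & E34 & M) t1 t2 u1 u2 r1 r2 r1' r2' _ _ _ _ R1 R2.
    assert (Hz : Aq s = C0 /\ Bq s = C0 /\ Cq s = C0 /\ Dq s = C0).
    { unfold at_most_one_nonzero in M. unfold Aq, Bq, Cq, Dq. rewrite E12, E34.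
      destruct M as ([Ha|Ha] & [Hb|Hb] & [Hc|Hc] & [Hd|Hd] & [Hf|Hf] & [Hg|Hg]);
      rewrite ?Ha, ?Hb, ?Hc, ?Hd, ?Hf, ?Hg;
      unfold Cadd, Csub, Cmul, Cconj, C0; repeat split; apply Cx_eq; simpl; ring. }
    destruct Hz as (HA & HB & HC & HD).
    assert (P : pfun s eps t1 t2 = pfun s eps u1 u2).
    { rewrite !pfun_form, E12, E34; unfold G, C0; simpl; ring. }
    assert (Q : qfun s eps t1 t2 = qfun s eps u1 u2).
    { rewrite !qfun_form; unfold qG; rewrite HA, HB, HC, HD, E12, E34; unfold G, C0; simpl; ring. }
    rewrite P, Q in R1. exact (roots_unique _ _ _ _ _ _ R1 R2).
Qed.
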